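(* Let $0<a<1$ and let $\tau_1,\tau_2:[0,a]\to[0,1]$ be continuously differentiable, strictly increasing maps with $\tau_i(0)=0$, $\tau_i(a)=1$, $\tau_1(x)\le x/a$ and $\tau_2(x)\ge x/a$, such that $\tau_{21}=\tau_2^{-1}\circ\tau_1:[0,a]\to[0,a]$ is continuously differentiable and satisfies $\tau_{21}(x)<x$ for $x\in(0,a)$. Let $0<\widehat a<a$ and $\sigma<1$ be such that $\tau_{21}'(x)\le\sigma$ for $x\in[0,\widehat a]$. Then the unique bounded solution on $[0,\widehat a]$ of the functional equation $$p(x)=p(\tau_{21}(x))\,\tau_{21}'(x)-\left[\tau_{21}'(x)-a\,\tau_1'(x)\right]$$ is given by the convergent series $$p(x)=\sum_{n=0}^\infty B(\tau_{21}^n(x))\,(\tau_{21}^n)'(x),\qquad x\in[0,\widehat a],$$ where $B(x)=a\,\tau_1'(x)-\tau_{21}'(x)$ and $\tau_{21}^n$ denotes the $n$-th iterate. *)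

(* Defs.v *)
From Stdlib Require Import Reals.
From Coquelicot Require Import Coquelicot.
Open Scope R_scope.

Definition deriv_within (lo hi : R) (f : R -> R) (x f' : R) : Prop :=
  filterlim (fun y => (f y - f x) / (y - x))
    (within (fun y => lo <= y <= hi /\ y <> x) (locally x))
    (locally f').

Definition continuous_on_interval (lo hi : R) (g : R -> R) : Prop :=
  forall x, lo <= x <= hi ->
    filterlim g (within (fun y => lo <= y <= hi) (locally x)) (locally (g x)).

Definition C1_on (lo hi : R) (f f' : R -> R) : Prop :=
  (forall x, lo <= x <= hi -> deriv_within lo hi f x (f' x)) /\
  continuous_on_interval lo hi f'.

Definition strictly_increasing_on (lo hi : R) (f : R -> R) : Prop :=
  forall x y, lo <= x <= hi -> lo <= y <= hi -> x < y -> f x < f y.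

Definition bounded_solution (a ah : R) (t21 d21 d1 p : R -> R) : Prop :=
  (exists M, forall x, 0 <= x <= ah -> Rabs (p x) <= M) /\
  (forall x, 0 <= x <= ah ->
     p x = p (t21 x) * d21 x - (d21 x - a * d1 x)).

(* Main.v *)
Require Import Defs.
From Stdlib Require Import Reals Lra Psatz.
From Coquelicot Require Import Coquelicot.

Open Scope R_scope.

Lemma ballR (x e y : R) : ball x e y <-> Rabs (y - x) < e.
Proof. reflexivity. Qed.

Definition deps (lo hi : R) (f : R -> R) (x l : R) : Prop :=
  forall eps, 0 < eps -> exists del, 0 < del /\ forall y, lo <= y <= hi -> y <> x ->
    Rabs (y - x) < del -> Rabs ((f y - f x) / (y - x) - l) < eps.

Lemma deriv_deps lo hi f x l : deriv_within lo hi f x l <-> deps lo hi f x l.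
Proof.
  unfold deriv_within, deps. rewrite filterlim_locally. split.
  - intros H eps Heps. destruct (H (mkposreal eps Heps)) as [d Hd].
    exists d. split; [apply cond_pos|]. intros y Hy Hyx Hyd.
    apply (Hd y); [exact Hyd| split; assumption].
  - intros H eps. destruct (H eps (cond_pos eps)) as [d [Hd0 Hd]].
    exists (mkposreal d Hd0). intros y Hyd [Hy Hyx]. apply ballR. apply Hd; assumption.
Qed.

Lemma cont_eps lo hi g x : continuous_on_interval lo hi g -> lo <= x <= hi ->
  forall eps, 0 < eps -> exists del, 0 < del /\ forall y, lo <= y <= hi ->
    Rabs (y - x) < del -> Rabs (g y - g x) < eps.
Proof.
  intros H Hx eps Heps. specialize (H x Hx). rewrite filterlim_locally in H.
  destruct (H (mkposreal eps Heps)) as [d Hd].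
  exists d. split; [apply cond_pos|]. intros y Hy Hyd. apply (Hd y Hyd Hy).
Qed.

Lemma near_pt a x del : 0 < a -> 0 <= x <= a -> 0 < del ->
  exists y, 0 <= y <= a /\ y <> x /\ Rabs (y - x) < del.
Proof.
  intros Ha Hx Hd. set (m := Rmin del a / 2).
  assert (0 < m) by (unfold m; generalize (Rmin_pos del a Hd Ha); lra).
  assert (m < del) by (unfold m; generalize (Rmin_l del a); lra).
  assert (m <= a / 2) by (unfold m; generalize (Rmin_r del a); lra).
  destruct (Rle_dec x (a/2)).
  - exists (x + m). repeat split; try lra. rewrite Rabs_right; lra.
  - exists (x - m). repeat split; try lra. rewrite Rabs_left; lra.
Qed.

Lemma deps_unique a f x l1 l2 : 0 < a -> 0 <= x <= a ->
  deps 0 a f x l1 -> deps 0 a f x l2 -> l1 = l2.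
Proof.
  intros Ha Hx H1 H2. destruct (Req_dec l1 l2) as [|Hne]; [auto|exfalso].
  set (e := Rabs (l1 - l2) / 2).
  assert (He : 0 < e) by (unfold e; assert (l1 - l2 <> 0) by (intro; apply Hne; lra); generalize (Rabs_pos_lt _ H); lra).
  destruct (H1 e He) as [d1 [Hd1 H1']]. destruct (H2 e He) as [d2 [Hd2 H2']].
  destruct (near_pt a x (Rmin d1 d2) Ha Hx) as [y [Hy [Hyx Hyd]]].
  { apply Rmin_pos; auto. }
  specialize (H1' y Hy Hyx (Rlt_le_trans _ _ _ Hyd (Rmin_l _ _))).
  specialize (H2' y Hy Hyx (Rlt_le_trans _ _ _ Hyd (Rmin_r _ _))).
  set (q := (f y - f x) / (y - x)) in *.
  assert (Rabs (l1 - l2) <= Rabs (q - l2) + Rabs (q - l1)).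
  { replace (l1 - l2) with ((q - l2) - (q - l1)) by ring.
    eapply Rle_trans; [apply Rabs_triang|]. rewrite Rabs_Ropp. lra. }
  unfold e in *. lra.
Qed.

Lemma deps_incr_nonneg a f x l : 0 < a -> 0 <= x <= a ->
  strictly_increasing_on 0 a f -> deps 0 a f x l -> 0 <= l.
Proof.
  intros Ha Hx Hi H. destruct (Rle_dec 0 l) as [|Hl]; [auto|exfalso].
  destruct (H (- l)) as [d [Hd H']]; [lra|].
  destruct (near_pt a x d Ha Hx Hd) as [y [Hy [Hyx Hyd]]].
  specialize (H' y Hy Hyx Hyd).
  assert (0 < (f y - f x) / (y - x)).
  { destruct (Rlt_dec x y).
    - apply Rdiv_lt_0_compat; [|lra]. specialize (Hi x y Hx Hy r); lra.
    - assert (y < x) by lra. specialize (Hi y x Hy Hx H0).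
      replace ((f y - f x) / (y - x)) with ((f x - f y) / (x - y)) by (field; lra).
      apply Rdiv_lt_0_compat; lra. }
  apply Rabs_def2 in H'. lra.
Qed.

Lemma deps_chain a f g x lf lg : (forall y, 0 <= y <= a -> 0 <= g y <= a) -> 0 <= x <= a ->
  deps 0 a f (g x) lf -> deps 0 a g x lg -> deps 0 a (fun y => f (g y)) x (lf * lg).
Proof.
  intros Hg Hx Hf Hgd eps Heps.
  set (A := Rabs lg + 1). set (F := Rabs lf + 1).
  assert (HA : 0 < A) by (unfold A; generalize (Rabs_pos lg); lra).
  assert (HF : 0 < F) by (unfold F; generalize (Rabs_pos lf); lra).
  set (e1 := eps / (2 * A)). set (e2 := Rmin 1 (eps / (2 * F))).
  assert (He1 : 0 < e1) by (unfold e1; apply Rdiv_lt_0_compat; lra).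
  assert (He2 : 0 < e2) by (unfold e2; apply Rmin_pos; [lra| apply Rdiv_lt_0_compat; lra]).
  destruct (Hf e1 He1) as [d1 [Hd1 Hf']]. destruct (Hgd e2 He2) as [d2 [Hd2 Hg']].
  exists (Rmin d2 (d1 / A)). split; [apply Rmin_pos; [lra|apply Rdiv_lt_0_compat; lra]|].
  intros y Hy Hyx Hyd.
  assert (Hyx' : y - x <> 0) by lra.
  assert (Hyd2 : Rabs (y - x) < d2) by (eapply Rlt_le_trans; [exact Hyd| apply Rmin_l]).
  assert (Hyd1 : Rabs (y - x) < d1 / A) by (eapply Rlt_le_trans; [exact Hyd| apply Rmin_r]).
  set (u := (g y - g x) / (y - x)).
  assert (Hu : Rabs (u - lg) < e2) by (apply Hg'; auto).
  assert (He2a : e2 <= 1) by apply Rmin_l.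
  assert (He2b : e2 <= eps / (2 * F)) by apply Rmin_r.
  assert (HuA : Rabs u <= A).
  { unfold A. replace u with ((u - lg) + lg) by ring.
    eapply Rle_trans; [apply Rabs_triang|]. lra. }
  assert (Hlf : Rabs lf * Rabs (u - lg) <= eps / 2).
  { apply Rle_trans with (F * e2).
    - apply Rmult_le_compat; try apply Rabs_pos; unfold F; lra.
    - unfold e2 in He2b |- *. apply Rle_trans with (F * (eps / (2 * F))).
      + apply Rmult_le_compat_l; lra.
      + right. field. lra. }
  destruct (Req_dec (g y) (g x)) as [Heq|Hne].
  - rewrite Heq. replace ((f (g x) - f (g x)) / (y - x) - lf * lg) with (lf * (u - lg)).
    + rewrite Rabs_mult. lra.
    + unfold u. rewrite Heq. field. auto.
  - assert (Hgyd : Rabs (g y - g x) < d1).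
    { replace (g y - g x) with (u * (y - x)) by (unfold u; field; auto).
      rewrite Rabs_mult.
      apply Rle_lt_trans with (A * Rabs (y - x)).
      - apply Rmult_le_compat_r; [apply Rabs_pos| exact HuA].
      - replace d1 with (A * (d1 / A)) by (field; lra).
        apply Rmult_lt_compat_l; auto. }
    specialize (Hf' (g y) (Hg y Hy) Hne Hgyd).
    set (phi := (f (g y) - f (g x)) / (g y - g x)) in *.
    replace ((f (g y) - f (g x)) / (y - x) - lf * lg)
      with ((phi - lf) * u + lf * (u - lg)).
    2:{ unfold phi, u. field. split; auto. intro; apply Hne; lra. }
    eapply Rle_lt_trans; [apply Rabs_triang|]. rewrite !Rabs_mult.
    assert (Rabs (phi - lf) * Rabs u < eps / 2).
    { apply Rle_lt_trans with (Rabs (phi - lf) * A).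
      - apply Rmult_le_compat_l; [apply Rabs_pos|auto].
      - replace (eps / 2) with (e1 * A) by (unfold e1; field; lra).
        apply Rmult_lt_compat_r; auto. }
    lra.
Qed.

Definition clamp (a y : R) := Rmax 0 (Rmin y a).

Lemma clamp_prop a y : 0 < a -> 0 <= clamp a y <= a /\
  (clamp a y = y \/ (y < 0 /\ clamp a y = 0) \/ (a < y /\ clamp a y = a)).
Proof.
  intro Ha. unfold clamp, Rmax, Rmin.
  destruct (Rle_dec y a); destruct (Rle_dec 0 _); lra.
Qed.

Lemma cont_bounded a g : 0 < a -> continuous_on_interval 0 a g ->
  exists M, forall x, 0 <= x <= a -> g x <= M.
Proof.
  intros Ha Hc.
  destruct (continuity_ab_maj (fun y => g (clamp a y)) 0 a) as [Mx [HM _]].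
  - lra.
  - intros c Hcab eps Heps.
    destruct (cont_eps 0 a g c Hc Hcab eps Heps) as [d [Hd Hd']].
    exists d. split; [auto|]. intros y [_ Hy].
    unfold R_dist in *. simpl in *.
    destruct (clamp_prop a c Ha) as [_ Hcc].
    assert (Ecc : clamp a c = c) by (destruct Hcc as [|[[? ?]|[? ?]]]; lra).
    rewrite Ecc. destruct (clamp_prop a y Ha) as [Hy1 Hy2].
    apply Hd'; [auto|].
    apply Rle_lt_trans with (Rabs (y - c)); [|auto].
    destruct Hy2 as [E|[[? E]|[? E]]]; rewrite E; [lra| |];
      unfold Rabs; repeat destruct Rcase_abs; lra.
  - exists (g (clamp a Mx)). intros x Hx. specialize (HM x Hx).
    destruct (clamp_prop a x Ha) as [_ Hcc].
    assert (Ecc : clamp a x = x) by (destruct Hcc as [|[[? ?]|[? ?]]]; lra).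
    rewrite Ecc in HM. exact HM.
Qed.

Fixpoint Dp (d21 t21 : R -> R) (n : nat) (x : R) : R :=
  match n with
  | O => 1
  | S m => d21 (Nat.iter m t21 x) * Dp d21 t21 m x
  end.

Lemma Dp_succ d21 t21 n x : Dp d21 t21 (S n) x = Dp d21 t21 n (t21 x) * d21 x.
Proof.
  induction n as [|n IH].
  - simpl. ring.
  - change (Dp d21 t21 (S (S n)) x) with (d21 (Nat.iter (S n) t21 x) * Dp d21 t21 (S n) x).
    rewrite IH, Nat.iter_succ_r. simpl. ring.
Qed.

Lemma iter_range lo hi t n x : (forall y, lo <= y <= hi -> lo <= t y <= hi) ->
  lo <= x <= hi -> lo <= Nat.iter n t x <= hi.
Proof. intros Ht Hx. induction n; simpl; auto. Qed.

Lemma deps_iter a t d n x : 0 < a -> (forall y, 0 <= y <= a -> 0 <= t y <= a) ->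
  (forall y, 0 <= y <= a -> deps 0 a t y (d y)) -> 0 <= x <= a ->
  deps 0 a (Nat.iter n t) x (Dp d t n x).
Proof.
  intros Ha Ht Hd Hx. induction n as [|n IH].
  - simpl. intros eps Heps. exists 1. split; [lra|]. intros y _ Hyx _.
    simpl. replace ((y - x) / (y - x) - 1) with 0 by (field; lra). rewrite Rabs_R0; lra.
  - change (Nat.iter (S n) t) with (fun y => t (Nat.iter n t y)). simpl Dp.
    apply deps_chain; auto.
    + intros y Hy; apply iter_range; auto.
    + apply Hd, iter_range; auto.
Qed.

Lemma sol_series a ah sigma t21 d21 d1 q x :
  0 <= sigma < 1 ->
  (forall y, 0 <= y <= ah -> 0 <= t21 y <= ah) ->
  (forall n y, 0 <= y <= ah -> 0 <= Dp d21 t21 n y <= sigma ^ n) ->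
  bounded_solution a ah t21 d21 d1 q -> 0 <= x <= ah ->
  is_series (fun n => (fun y => a * d1 y - d21 y) (Nat.iter n t21 x) * Dp d21 t21 n x) (q x).
Proof.
  intros Hs Ht HD [[M HM] Hq] Hx.
  set (term := fun n => (fun y => a * d1 y - d21 y) (Nat.iter n t21 x) * Dp d21 t21 n x).
  set (r := fun n => q (Nat.iter (S n) t21 x) * Dp d21 t21 (S n) x).
  assert (Hsum : forall n, sum_n term n = q x - r n).
  { induction n as [|n IH].
    - rewrite sum_O. unfold term, r. simpl. rewrite (Hq x Hx). ring.
    - rewrite sum_Sn, IH. unfold plus; simpl. unfold term, r.
      assert (Hy : 0 <= Nat.iter (S n) t21 x <= ah) by (apply iter_range; auto).
      change (Nat.iter (S (S n)) t21 x) with (t21 (Nat.iter (S n) t21 x)).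
      change (Dp d21 t21 (S (S n)) x) with (d21 (Nat.iter (S n) t21 x) * Dp d21 t21 (S n) x).
      rewrite (Hq _ Hy). ring. }
  assert (HM0 : 0 <= M) by (generalize (HM x Hx) (Rabs_pos (q x)); lra).
  assert (Hr : is_lim_seq r 0).
  { assert (Hg : is_lim_seq (fun n => (M * sigma) * sigma ^ n) 0).
    { replace (Finite 0) with (Rbar_mult (M * sigma) 0) by (simpl; f_equal; ring).
      apply is_lim_seq_scal_l, is_lim_seq_geom. rewrite Rabs_right; lra. }
    apply is_lim_seq_le_le with (u := fun n => - ((M * sigma) * sigma ^ n))
                                (w := fun n => (M * sigma) * sigma ^ n); auto.
    - intro n. unfold r.
      assert (Hy : 0 <= Nat.iter (S n) t21 x <= ah) by (apply iter_range; auto).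
      specialize (HM _ Hy). specialize (HD (S n) x Hx). simpl pow in HD.
      set (u := q (Nat.iter (S n) t21 x)) in *. set (v := Dp d21 t21 (S n) x) in *.
      apply Rabs_le_between in HM. nra.
    - replace (Finite 0) with (Rbar_opp 0) by (simpl; f_equal; ring).
      apply -> is_lim_seq_opp. exact Hg. }
  assert (Hl : is_lim_seq (sum_n term) (q x)).
  { apply is_lim_seq_ext with (fun n => q x - r n).
    - intro n; rewrite Hsum; auto.
    - assert (H0 := is_lim_seq_minus' _ _ _ _ (is_lim_seq_const (q x)) Hr).
      replace (q x - 0) with (q x) in H0 by ring. exact H0. }
  exact Hl.
Qed.

Theorem proposition3
  (a ah sigma : R) (tau1 tau2 tau21 d1 d2 d21 : R -> R)
  (Ha : 0 < a < 1)
  (Hc1 : C1_on 0 a tau1 d1) (Hc2 : C1_on 0 a tau2 d2)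
  (Hinc1 : strictly_increasing_on 0 a tau1)
  (Hinc2 : strictly_increasing_on 0 a tau2)
  (Hrg1 : forall x, 0 <= x <= a -> 0 <= tau1 x <= 1)
  (Hrg2 : forall x, 0 <= x <= a -> 0 <= tau2 x <= 1)
  (H10 : tau1 0 = 0) (H1a : tau1 a = 1)
  (H20 : tau2 0 = 0) (H2a : tau2 a = 1)
  (Hle1 : forall x, 0 <= x <= a -> tau1 x <= x / a)
  (Hge2 : forall x, 0 <= x <= a -> tau2 x >= x / a)
  (H21rg : forall x, 0 <= x <= a -> 0 <= tau21 x <= a)
  (H21def : forall x, 0 <= x <= a -> tau2 (tau21 x) = tau1 x)
  (Hc21 : C1_on 0 a tau21 d21)
  (H21lt : forall x, 0 < x < a -> tau21 x < x)
  (Hah : 0 < ah < a) (Hsig : sigma < 1)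
  (Hd21 : forall x, 0 <= x <= ah -> d21 x <= sigma) :
  let B := fun x => a * d1 x - d21 x in
  (* the derivatives of the iterates tau21^n exist on [0,a] *)
  (forall n : nat, exists Dn : R -> R,
      forall x, 0 <= x <= a -> deriv_within 0 a (Nat.iter n tau21) x (Dn x)) /\
  exists p : R -> R,
    bounded_solution a ah tau21 d21 d1 p /\
    (forall q : R -> R, bounded_solution a ah tau21 d21 d1 q ->
       forall x, 0 <= x <= ah -> q x = p x) /\
    (forall D : nat -> R -> R,
       (forall n x, 0 <= x <= a -> deriv_within 0 a (Nat.iter n tau21) x (D n x)) ->
       forall x, 0 <= x <= ah ->
         is_series (fun n => B (Nat.iter n tau21 x) * D n x) (p x)).
Proof.
  intros B.
  assert (Ha0 : 0 < a) by lra.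
  assert (Hd1 : forall x, 0 <= x <= a -> deps 0 a tau1 x (d1 x))
    by (intros; apply deriv_deps, (proj1 Hc1); auto).
  assert (Hdd21 : forall x, 0 <= x <= a -> deps 0 a tau21 x (d21 x))
    by (intros; apply deriv_deps, (proj1 Hc21); auto).
  assert (Ht0 : tau21 0 = 0).
  { destruct (H21rg 0) as [H0 _]; [lra|]. destruct H0 as [H0|H0]; [|auto].
    exfalso. assert (Hr : 0 <= tau21 0 <= a) by (apply H21rg; lra).
    generalize (Hinc2 0 (tau21 0) ltac:(lra) Hr H0). rewrite H21def by lra. lra. }
  assert (Hinc21 : strictly_increasing_on 0 a tau21).
  { intros x y Hx Hy Hxy. destruct (Rlt_le_dec (tau21 x) (tau21 y)) as [|Hle]; [auto|exfalso].
    generalize (Hinc1 x y Hx Hy Hxy). rewrite <- (H21def x Hx), <- (H21def y Hy).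
    destruct Hle as [Hlt|Heq].
    - generalize (Hinc2 _ _ (H21rg y Hy) (H21rg x Hx) Hlt). lra.
    - rewrite Heq. lra. }
  assert (Hah_rg : forall y, 0 <= y <= ah -> 0 <= tau21 y <= ah).
  { intros y Hy. destruct (Req_dec y 0) as [->|Hy0]; [lra|].
    generalize (H21lt y ltac:(lra)) (H21rg y ltac:(lra)). lra. }
  assert (Hd21p : forall x, 0 <= x <= a -> 0 <= d21 x)
    by (intros; apply (deps_incr_nonneg a tau21 x); auto).
  assert (Hd1p : forall x, 0 <= x <= a -> 0 <= d1 x)
    by (intros; apply (deps_incr_nonneg a tau1 x); auto).
  assert (Hs0 : 0 <= sigma) by (generalize (Hd21p 0 ltac:(lra)) (Hd21 0 ltac:(lra)); lra).
  assert (HDb : forall n y, 0 <= y <= ah -> 0 <= Dp d21 tau21 n y <= sigma ^ n).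
  { induction n as [|n IH]; intros y Hy; simpl; [lra|].
    assert (Hi : 0 <= Nat.iter n tau21 y <= ah) by (apply iter_range; auto).
    generalize (Hd21p (Nat.iter n tau21 y) ltac:(lra)) (Hd21 _ Hi) (IH y Hy). intros. nra. }
  destruct (cont_bounded a d1 Ha0 (proj2 Hc1)) as [M1 HM1].
  set (K := a * M1 + sigma).
  assert (HB : forall y, 0 <= y <= ah -> Rabs (B y) <= K).
  { intros y Hy. unfold B, K. generalize (Hd1p y ltac:(lra)) (HM1 y ltac:(lra))
      (Hd21p y ltac:(lra)) (Hd21 y Hy). intros. apply Rabs_le; nra. }
  set (term := fun x n => B (Nat.iter n tau21 x) * Dp d21 tau21 n x).
  assert (Hterm : forall x n, 0 <= x <= ah -> Rabs (term x n) <= K * sigma ^ n).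
  { intros x n Hx. unfold term. rewrite Rabs_mult.
    assert (Hi : 0 <= Nat.iter n tau21 x <= ah) by (apply iter_range; auto).
    generalize (HB _ Hi) (HDb n x Hx) (Rabs_pos (B (Nat.iter n tau21 x))). intros.
    rewrite (Rabs_right (Dp _ _ _ _)) by lra. nra. }
  assert (Hgeo : ex_series (fun n => K * sigma ^ n)).
  { apply (ex_series_scal_l K (fun n => sigma ^ n)). eexists. apply is_series_geom.
    rewrite Rabs_right; lra. }
  assert (Habs : forall x, 0 <= x <= ah -> ex_series (fun n => Rabs (term x n))).
  { intros x Hx. apply (@ex_series_le R_AbsRing R_CompleteNormedModule _ (fun n => K * sigma ^ n)); auto.
    intro n. change norm with Rabs. rewrite Rabs_Rabsolu. auto. }
  assert (Hex : forall x, 0 <= x <= ah -> ex_series (term x))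
    by (intros; apply ex_series_Rabs; auto).
  set (p := fun x => Series (term x)).
  assert (Hsol : bounded_solution a ah tau21 d21 d1 p).
  { split.
    - exists (K / (1 - sigma)). intros x Hx. unfold p.
      eapply Rle_trans; [apply Series_Rabs; auto|].
      eapply Rle_trans; [apply (Series_le _ (fun n => K * sigma ^ n));
        [intro n; split; [apply Rabs_pos| auto] | exact Hgeo]|].
      rewrite Series_scal_l, Series_geom by (rewrite Rabs_right; lra). right. field; lra.
    - intros x Hx. unfold p. rewrite (Series_incr_1 _ (Hex x Hx)).
      rewrite (Series_ext (fun k => term x (S k)) (fun k => term (tau21 x) k * d21 x)).
      + rewrite Series_scal_r. unfold term; simpl; unfold B; ring.
      + intro k. unfold term. rewrite Nat.iter_succ_r, Dp_succ. ring. }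
  split.
  - intro n. exists (Dp d21 tau21 n). intros x Hx. apply deriv_deps, deps_iter; auto.
  - exists p. split; [exact Hsol|]. split.
    + intros q Hq x Hx.
      assert (H := sol_series a ah sigma tau21 d21 d1 q x ltac:(lra) Hah_rg HDb Hq Hx).
      unfold p. symmetry. apply is_series_unique. exact H.
    + intros D HD x Hx.
      apply is_series_ext with (fun n => B (Nat.iter n tau21 x) * Dp d21 tau21 n x).
      * intro n. f_equal. apply (deps_unique a (Nat.iter n tau21) x); [lra|lra| |].
        -- apply deps_iter; auto; lra.
        -- apply deriv_deps, HD; lra.
      * exact (sol_series a ah sigma tau21 d21 d1 p x ltac:(lra) Hah_rg HDb Hsol Hx).
Qed.
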